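(* Fix a parameter space $W$, a data space $X$, an update rule $g: W\times X\to W$, a metric $d$ on $W$ and initial parameters $\mathbf{w}_0\in W$. Then the relation on datasets $D\subseteq X$ given by ''$D$ and $D'$ are forgeable with $\epsilon=0$'' is an equivalence relation.
   Context: A valid $(g,d,\epsilon)$ log is a sequence $\{(\mathbf{w}_i,\mathbf{x}_i)\}_{i\in J}$ ($J$ a countable index set, consecutive indices) such that $d(\mathbf{w}_{i+1}, g(\mathbf{w}_i,\mathbf{x}_i))\le \epsilon$ for all $i\in J$. For a dataset $D$, $H_{D,g,d,\epsilon}$ is the set of all valid $(g,d,\epsilon)$ logs starting from $\mathbf{w}_0$ whose data points all lie in $D$. A forging map from $D$ to $D'$ (with $\epsilon$) is a map $B: H_{D,g,d,0}\to H_{D',g,d,\epsilon}$ with $B(\{(\mathbf{w}_i,\mathbf{x}_i)\}_{i\in J})=\{(\mathbf{w}_i,\tilde{\mathbf{x}}_i)\}_{i\in J}$, $\tilde{\mathbf{x}}_i\in D'$, the output being a valid $(g,d,\epsilon)$ log. $D$ and $D'$ are forgeable with $\epsilon$ if there is a forging map from $D$ to $D'$ and one from $D'$ to $D$, both with $\epsilon$. *)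

(* Defs.v *)
From Stdlib Require Import Reals List Relation_Definitions.
Open Scope R_scope.

Set Implicit Arguments.

Definition is_metric (W : Type) (d : W -> W -> R) : Prop :=
  (forall a b, 0 <= d a b) /\
  (forall a b, d a b = 0 <-> a = b) /\
  (forall a b, d a b = d b a) /\
  (forall a b c, d a c <= d a b + d b c).

(* A log {(w_i, x_i)}_{i in J}: J is a countable set of consecutive indices
   starting at 0, i.e. either {0,...,n-1} (finite log) or all of nat. *)
Inductive log (W X : Type) : Type :=
| FinLog : list (W * X) -> log W X
| InfLog : (nat -> W * X) -> log W X.

Definition entry (W X : Type) (l : log W X) (i : nat) : option (W * X) :=
  match l with
  | FinLog s => nth_error s i
  | InfLog f => Some (f i)
  end.

Definition valid_log (W X : Type) (g : W -> X -> W) (d : W -> W -> R)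
  (eps : R) (l : log W X) : Prop :=
  forall i p q, entry l i = Some p -> entry l (S i) = Some q ->
    d (fst q) (g (fst p) (snd p)) <= eps.

Definition in_H (W X : Type) (g : W -> X -> W) (d : W -> W -> R) (w0 : W)
  (eps : R) (D : X -> Prop) (l : log W X) : Prop :=
  valid_log g d eps l /\
  (forall p, entry l 0 = Some p -> fst p = w0) /\
  (forall i p, entry l i = Some p -> D (snd p)).

(* B l has the same index set J and the same parameters w_i as l *)
Definition same_weights (W X : Type) (l l' : log W X) : Prop :=
  forall i, option_map fst (entry l i) = option_map fst (entry l' i).

Definition forging_map (W X : Type) (g : W -> X -> W) (d : W -> W -> R)
  (w0 : W) (eps : R) (D D' : X -> Prop) (B : log W X -> log W X) : Prop :=
  forall l, in_H g d w0 0 D l ->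
    in_H g d w0 eps D' (B l) /\ same_weights l (B l).

Definition forgeable (W X : Type) (g : W -> X -> W) (d : W -> W -> R)
  (w0 : W) (eps : R) (D D' : X -> Prop) : Prop :=
  (exists B, forging_map g d w0 eps D D' B) /\
  (exists B, forging_map g d w0 eps D' D B).

(* Main.v *)
Require Import Defs.
From Stdlib Require Import Reals Relation_Definitions.
Open Scope R_scope.

Theorem lemma2 (W X : Type) (g : W -> X -> W) (d : W -> W -> R) (w0 : W)
  (hd : is_metric d) :
  equivalence (X -> Prop) (forgeable g d w0 0).
Proof.
  split.
  - intro D. split; exists (fun l => l); intros l Hl; split; [exact Hl | intro i; reflexivity | exact Hl | intro i; reflexivity].
  - intros D1 D2 D3 [[B1 H1] [B1' H1']] [[B2 H2] [B2' H2']]. split.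
    + exists (fun l => B2 (B1 l)). intros l Hl.
      destruct (H1 l Hl) as [Ha Sa]. destruct (H2 _ Ha) as [Hb Sb].
      split; [exact Hb|]. intro i. rewrite Sa. apply Sb.
    + exists (fun l => B1' (B2' l)). intros l Hl.
      destruct (H2' l Hl) as [Ha Sa]. destruct (H1' _ Ha) as [Hb Sb].
      split; [exact Hb|]. intro i. rewrite Sa. apply Sb.
  - intros D1 D2 [A B]. split; assumption.
Qed.
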